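(* Let $S$ be a commutative unital ring of positive characteristic, and let $\ell\in S$ satisfy: (i) $\ell-1$ is regular; (ii) for all positive integers $m,n$, $(\ell^m-1)\mid(\ell^n-1)$ in $S$ if and only if $m\mid n$ (in particular all positive powers of $\ell$ are distinct); (iii) $0_S$ is the only multiple of $\ell-1$ in the set $\{n\cdot 1_S: n\in\mathbb{Z}\}$. Then for every $y\in S$: (a) $y\in\operatorname{MPOW}(\ell)$ if and only if $y\in\operatorname{POW}(\ell)$ and $(\ell-1)^2\mid (y-1)$; (b) if moreover $\operatorname{char}(S)$ is a prime number, then $y\in\operatorname{PPOW}(\ell)$ if and only if $y\in\operatorname{MPOW}(\ell)$ and, for every $y'\in\operatorname{POW}(\ell)$ with $y'\neq\ell$ and $(y'-1)\mid(y-1)$, we have $y'\in\operatorname{MPOW}(\ell)$.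
   Context: An element $a\in S$ is regular if $ab=ac$ implies $b=c$. $\operatorname{POW}(\ell)=\{\ell^n:n\ge1\}$. When $\operatorname{char}(S)=c>0$: $\operatorname{MPOW}(\ell)$ is the set of powers $\ell^n$ with $n$ a positive multiple of $c$, and $\operatorname{PPOW}(\ell)$ is the set of powers $\ell^{n}$ with $n=c^k$ for some integer $k\ge1$. *)

(* Defs.v *)
From HB Require Import structures.
From mathcomp Require Import all_boot all_order all_algebra.
Set Implicit Arguments. Unset Strict Implicit. Unset Printing Implicit Defensive.
Import Order.TTheory GRing.Theory Num.Theory.
Local Open Scope ring_scope.

Definition dvdS (S : comNzRingType) (a b : S) : Prop := exists x : S, b = a * x.

Definition regularS (S : comNzRingType) (a : S) : Prop :=
  forall b c : S, a * b = a * c -> b = c.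

Definition has_pos_char (S : comNzRingType) (c : nat) : Prop :=
  (0 < c)%N /\ (c%:R : S) = 0 /\ (forall k : nat, (0 < k)%N -> (k%:R : S) = 0 -> (c <= k)%N).

Definition POW (S : comNzRingType) (l y : S) : Prop :=
  exists n : nat, (0 < n)%N /\ y = l ^+ n.

Definition MPOW (S : comNzRingType) (c : nat) (l y : S) : Prop :=
  exists n : nat, (0 < n)%N /\ (c %| n)%N /\ y = l ^+ n.

Definition PPOW (S : comNzRingType) (c : nat) (l y : S) : Prop :=
  exists k : nat, (1 <= k)%N /\ y = l ^+ (c ^ k).

(* Main.v *)
Require Import Defs.
From HB Require Import structures.
From mathcomp Require Import all_boot all_order all_algebra.
From mathcomp Require Import ring.
Import Order.TTheory GRing.Theory Num.Theory.
Local Open Scope ring_scope.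

Lemma powm1 (S : comNzRingType) (l : S) (n : nat) :
  exists q, l ^+ n - 1 = (l - 1) * (n%:R + (l - 1) * q).
Proof.
elim: n => [|n [q IH]]; first by exists 0; rewrite expr0 subrr; ring.
exists (n%:R + l * q).
have e : l ^+ n = 1 + (l - 1) * (n%:R + (l - 1) * q) by rewrite -IH; ring.
rewrite exprS e -addn1 natrD; ring.
Qed.

Lemma char_dvd (S : comNzRingType) (c n : nat) :
  has_pos_char S c -> (n%:R : S) = 0 -> (c %| n)%N.
Proof.
move=> [c0 [cz cmin]] nz.
have : ((n %% c)%:R : S) = 0.
  move: nz; rewrite {1}(divn_eq n c) natrD natrM cz mulr0 add0r //.
case: (posnP (n %% c)) => [h _|h hz]; first by rewrite /dvdn h.
have := cmin _ h hz; rewrite leqNgt ltn_mod c0 //.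
Qed.

Lemma dvd_char (S : comNzRingType) (c n : nat) :
  has_pos_char S c -> (c %| n)%N -> (n%:R : S) = 0.
Proof.
move=> [c0 [cz _]] /dvdnP [k ->]; by rewrite natrM cz mulr0.
Qed.

Theorem lemma2p1 (S : comNzRingType) (c : nat) (l : S)
  (hchar : has_pos_char S c)
  (hreg : regularS (l - 1))
  (hdiv : forall m n : nat, (0 < m)%N -> (0 < n)%N ->
            (dvdS (l ^+ m - 1) (l ^+ n - 1) <-> (m %| n)%N))
  (hint : forall n : int, dvdS (l - 1) (n%:~R : S) -> (n%:~R : S) = 0) :
  forall y : S,
    (MPOW c l y <-> (POW l y /\ dvdS ((l - 1) ^+ 2) (y - 1))) /\
    (prime c ->
      (PPOW c l y <->
        (MPOW c l y /\
         forall y' : S, POW l y' -> y' <> l -> dvdS (y' - 1) (y - 1) -> MPOW c l y'))).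
Proof.
have powinj : forall m n, (0 < m)%N -> (0 < n)%N -> l ^+ m = l ^+ n -> m = n.
  move=> m n m0 n0 e; apply/eqP; rewrite eqn_dvd.
  by apply/andP; split; [apply/(hdiv _ _ m0 n0)|apply/(hdiv _ _ n0 m0)];
    rewrite e; exists 1; rewrite mulr1.
have ha : forall y, MPOW c l y <-> (POW l y /\ dvdS ((l - 1) ^+ 2) (y - 1)).
  move=> y; split.
    move=> [n [n0 [cn ->]]]; split; first by exists n.
    have [q ->] := @powm1 _ l n.
    by exists q; rewrite (@dvd_char _ _ _ hchar cn) add0r expr2 mulrA.
  move=> [[n [n0 ->]] [x hx]]; exists n; split => //; split => //.
  apply: (@char_dvd _ _ _ hchar).
  have [q hq] := @powm1 _ l n.
  have e : n%:R + (l - 1) * q = (l - 1) * x.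
    by apply: hreg; rewrite -hq hx expr2 mulrA.
  have := hint (n%:Z); apply.
  by exists (x - q); rewrite mulrBr -e; change ((n%:Z)%:~R) with (n%:R : S); ring.
move=> y; split => //; move=> cp; split.
  move=> [k [k1 ->]]; split.
    apply/ha; split; first by exists (c ^ k)%N; rewrite expn_gt0 prime_gt0.
    have cn : (c %| c ^ k)%N by rewrite dvdn_exp.
    have [q ->] := @powm1 _ l (c ^ k)%N.
    by exists q; rewrite (@dvd_char _ _ _ hchar cn) add0r expr2 mulrA.
  move=> y' [m [m0 ->]] ne dv; exists m; split => //; split => //.
  have : (m %| c ^ k)%N by apply/(hdiv _ _ m0); rewrite // expn_gt0 prime_gt0.
  case/(dvdn_pfactor _ _ cp) => j _ mj.
  case: j mj => [|j] mj; first by move: ne; rewrite mj expn0 expr1.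
  by rewrite mj dvdn_exp.
move=> [[n [n0 [cn ->]]] H].
have key : forall m, (1 < m)%N -> (m %| n)%N -> (c %| m)%N.
  move=> m m1 mn.
  have m0 : (0 < m)%N by apply: ltnW.
  have p1 : POW l (l ^+ m) by exists m.
  have p2 : l ^+ m <> l.
    move=> e; have m1' := powinj m 1 m0 isT ltac:(by rewrite expr1).
    by move: m1; rewrite m1'.
  have p3 : dvdS (l ^+ m - 1) (l ^+ n - 1) by apply/(hdiv _ _ m0 n0).
  have [m' [m'0 [cm' e]]] := H _ p1 p2 p3.
  by rewrite (powinj _ _ m0 m'0 e).
have [r cr nr] := pfactor_coprime cp n0.
have r0 : (0 < r)%N by move: n0; rewrite nr muln_gt0 => /andP[].
have rdn : (r %| n)%N by rewrite nr dvdn_mulr.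
case: (ltngtP r 1) => [|r1|r1].
- by rewrite ltnNge r0.
- have := key _ r1 rdn => cr'.
  have : (c %| gcdn c r)%N by rewrite dvdn_gcd dvdnn cr'.
  by rewrite (eqP cr) dvdn1 => /eqP c1; move: cp; rewrite c1.
move: nr; rewrite r1 mul1n => nr.
exists (logn c n); split; last by rewrite -nr.
case: (logn c n) nr => [|k] // nr.
by move: cn; rewrite nr expn0 dvdn1 => /eqP c1; move: cp; rewrite c1.
Qed.
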